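(* For any group $B$ and any integer $p\ge 2$, $$cw(B\wr C_p)\le\max(1,cw(B)).$$
   Context: $B\wr C_p=B^p\rtimes C_p$ is the wreath product with $C_p$ acting on $\{1,\dots,p\}$ by cyclic shifts. The commutator width $cw(G)$ of a group $G$ is the least $n$ such that every element of the derived subgroup $G'$ is a product of at most $n$ commutators $[x,y]=xyx^{-1}y^{-1}$ ($cw(G)=\infty$ if no such $n$ exists). *)

(* Defs.v *)
(* Abstract (possibly infinite) groups are given by a carrier
   type with explicit operations; the group axioms are a hypothesis. *)
From mathcomp Require Import all_boot all_algebra.
Set Implicit Arguments. Unset Strict Implicit. Unset Printing Implicit Defensive.
Import GRing.Theory.
Local Open Scope ring_scope.

Definition is_group (T : Type) (mul : T -> T -> T) (inv : T -> T) (one : T) : Prop :=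
  [/\ forall x y z, mul x (mul y z) = mul (mul x y) z,
      forall x, mul one x = x, forall x, mul x one = x,
      forall x, mul (inv x) x = one & forall x, mul x (inv x) = one].

Section Comm.
Variables (T : Type) (mul : T -> T -> T) (inv : T -> T) (one : T).

Definition commg_op (x y : T) : T := mul x (mul y (mul (inv x) (inv y))).

Inductive in_derived : T -> Prop :=
| der_one : in_derived one
| der_comm x y : in_derived (commg_op x y)
| der_mul a b : in_derived a -> in_derived b -> in_derived (mul a b)
| der_inv a : in_derived a -> in_derived (inv a).

Definition prod_comms (s : seq (T * T)) : T :=
  foldr (fun c acc => mul (commg_op c.1 c.2) acc) one s.

Definition cw_le (n : nat) : Prop :=
  forall g, in_derived g -> exists s : seq (T * T), (size s <= n)%N /\ g = prod_comms s.
End Comm.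

(* Wreath product B wr C_p = B^p >| C_p, with C_p = 'Z_p (p >= 2) acting on
   B^p = ('Z_p -> B) by cyclic shifts: (a . f)(i) = f (i - a). *)
Section Wreath.
Variables (B : Type) (mul : B -> B -> B) (inv : B -> B) (one : B) (p : nat).

Definition wr_T : Type := (('Z_p -> B) * 'Z_p)%type.
Definition shift (a : 'Z_p) (f : 'Z_p -> B) : 'Z_p -> B := fun i => f (i - a).
Definition wr_mul (x y : wr_T) : wr_T :=
  (fun i => mul (x.1 i) (shift x.2 y.1 i), x.2 + y.2).
Definition wr_inv (x : wr_T) : wr_T :=
  (shift (- x.2) (fun i => inv (x.1 i)), - x.2).
Definition wr_one : wr_T := (fun _ => one, 0).
End Wreath.

(* Main.v *)
Require Import Defs.
From mathcomp Require Import all_boot all_algebra.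
From Stdlib Require Import FunctionalExtensionality.
Set Implicit Arguments. Unset Strict Implicit. Unset Printing Implicit Defensive.
Import GRing.Theory.

Section Grp.
Variables (B : Type) (mul : B -> B -> B) (inv : B -> B) (one : B).
Hypothesis HG : is_group mul inv one.

Lemma mA x y z : mul x (mul y z) = mul (mul x y) z. Proof. by case: HG. Qed.
Lemma m1l x : mul one x = x. Proof. by case: HG. Qed.
Lemma m1r x : mul x one = x. Proof. by case: HG. Qed.
Lemma mVl x : mul (inv x) x = one. Proof. by case: HG. Qed.
Lemma mVr x : mul x (inv x) = one. Proof. by case: HG. Qed.
Lemma mKl x y : mul (inv x) (mul x y) = y. Proof. by rewrite mA mVl m1l. Qed.
Lemma mKr x y : mul x (mul (inv x) y) = y. Proof. by rewrite mA mVr m1l. Qed.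
Lemma invU x y : mul x y = one -> inv x = y.
Proof. by move=> h; rewrite -[inv x]m1r -h mKl. Qed.
Lemma inv1 : inv one = one. Proof. by apply: invU; rewrite m1l. Qed.
Lemma invK x : inv (inv x) = x. Proof. by apply: invU; rewrite mVl. Qed.
Lemma invM x y : inv (mul x y) = mul (inv y) (inv x).
Proof. by apply: invU; rewrite -mA mKr mVr. Qed.

Notation D := (in_derived mul inv one).
Notation cm := (commg_op mul inv).

Lemma Dconj w a : D a -> D (mul w (mul a (inv w))).
Proof.
move=> Da; have -> : mul w (mul a (inv w)) = mul (cm w a) a.
  by rewrite /commg_op -!mA mVl m1r.
by apply: der_mul => //; apply: der_comm.
Qed.

Definition E u v := D (mul u (inv v)).
Lemma Erefl u : E u u. Proof. rewrite /E mVr; exact: der_one. Qed.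
Lemma Esym {u v} : E u v -> E v u.
Proof. by move=> h; have := der_inv h; rewrite invM invK. Qed.
Lemma Etrans {u v w} : E u v -> E v w -> E u w.
Proof. by move=> h1 h2; have := der_mul h1 h2; rewrite -mA mKl. Qed.
Lemma EmulR {u v} w : E u v -> E (mul u w) (mul v w).
Proof. by rewrite /E invM mA -(mA u) mVr m1r. Qed.
Lemma EmulL {u v} w : E u v -> E (mul w u) (mul w v).
Proof. move=> h; rewrite /E invM -!mA; have := Dconj w h; by rewrite -!mA. Qed.
Lemma Emul {u v u' v'} : E u v -> E u' v' -> E (mul u u') (mul v v').
Proof. by move=> h1 h2; apply: Etrans (EmulR _ h1) (EmulL _ h2). Qed.
Lemma Einv {u v} : E u v -> E (inv u) (inv v).
Proof.
move=> h; rewrite /E invK.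
have := Dconj (inv u) (der_inv h); rewrite invM invK invK.
by rewrite -!mA mVl m1r.
Qed.
Lemma Ecomm u v : E (mul u v) (mul v u).
Proof. by rewrite /E invM -mA; apply: der_comm. Qed.
Lemma DE u : D u <-> E u one.
Proof. by rewrite /E inv1 m1r. Qed.
Lemma ED u v : E u v -> D v -> D u.
Proof. by move=> h Dv; have := der_mul h Dv; rewrite -mA mVl m1r. Qed.

Definition L (s : seq B) := foldr mul one s.
Lemma Lcat s t : L (s ++ t) = mul (L s) (L t).
Proof. by elim: s => [|x s IH] /=; rewrite ?m1l // IH mA. Qed.

Lemma Lperm (I : eqType) (s t : seq I) f : perm_eq s t -> E (L (map f s)) (L (map f t)).
Proof.
elim: s t => [|x s IH] t.
  by rewrite perm_sym => /perm_nilP ->; apply: Erefl.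
move=> pst; have xt : x \in t by rewrite -(perm_mem pst) mem_head.
case/splitPr: xt pst => t1 t2 pst.
have ps : perm_eq s (t1 ++ t2).
  by rewrite -(perm_cons x); apply: (perm_trans pst); rewrite -(cat1s x t2) perm_catCA.
rewrite map_cat /= Lcat /=.
apply: Etrans (EmulL _ (IH _ ps)) _.
rewrite map_cat Lcat !mA.
by apply: EmulR; apply: Ecomm.
Qed.

Lemma LmulE (I : eqType) (s : seq I) f g :
  E (L (map (fun i => mul (f i) (g i)) s)) (mul (L (map f s)) (L (map g s))).
Proof.
elim: s => [|x s IH] /=; first by rewrite m1l; apply: Erefl.
apply: Etrans (EmulL _ IH) _.
rewrite -!mA; apply: EmulL; rewrite !mA; apply: EmulR; apply: Ecomm.
Qed.

Lemma LinvE (I : eqType) (s : seq I) f :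
  E (L (map (fun i => inv (f i)) s)) (inv (L (map f s))).
Proof.
elim: s => [|x s IH] /=; first by rewrite inv1; apply: Erefl.
apply: Etrans (EmulL _ IH) _; rewrite invM; apply: Ecomm.
Qed.

Lemma L1 (I : eqType) (s : seq I) : L (map (fun _ => one) s) = one.
Proof. by elim: s => //= x s ->; rewrite m1l. Qed.

Variable (p : nat).
Notation Z := 'Z_p.
Notation W := (wr_T B p).
Definition Q (f : Z -> B) := L (map f (enum Z)).

Lemma perm_shift (a : Z) : perm_eq (map (fun i => i - a)%R (enum Z)) (enum Z).
Proof.
apply: uniq_perm; first by rewrite map_inj_uniq ?enum_uniq //; exact: subIr.
  exact: enum_uniq.
move=> i; rewrite mem_enum; apply/mapP; exists (i + a)%R; first by rewrite mem_enum.
by rewrite addrK.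
Qed.

Lemma Qshift a g : E (Q (shift a g)) (Q g).
Proof.
rewrite /Q /shift.
have -> : map (fun i => g (i - a)%R) (enum Z) = map g (map (fun i => i - a)%R (enum Z)).
  by elim: (enum Z) => //= ? ? ->.
exact: Lperm (perm_shift a).
Qed.

Lemma Qmul (x y : W) : E (Q (wr_mul mul x y).1) (mul (Q x.1) (Q y.1)).
Proof.
rewrite /Q /=; apply: Etrans (LmulE _ _ _) _.
apply: EmulL; exact: Qshift.
Qed.

Lemma Qinv (x : W) : E (Q (wr_inv inv x).1) (inv (Q x.1)).
Proof.
rewrite /=; apply: Etrans (Qshift _ _) _; exact: LinvE.
Qed.

Lemma derW w : in_derived (@wr_mul B mul p) (@wr_inv B inv p) (wr_one one p) w ->
  w.2 = 0%R /\ D (Q w.1).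
Proof.
elim=> [|x y|a b _ [a0 Da] _ [b0 Db]|a _ [a0 Da]].
- split => //; rewrite /Q /wr_one /= L1; exact: der_one.
- split; first by rewrite /= addrCA addNKr subrr.
  apply/DE; rewrite /commg_op.
  apply: Etrans (Qmul _ _) _; apply: Etrans (EmulL _ (Qmul _ _)) _.
  apply: Etrans (EmulL _ (EmulL _ (Qmul _ _))) _.
  apply: Etrans (EmulL _ (EmulL _ (Emul (Qinv _) (Qinv _)))) _.
  rewrite /E inv1 m1r; exact: (der_comm mul inv one (Q x.1) (Q y.1)).
- split; first by rewrite /= a0 b0 addr0.
  apply: ED (Qmul _ _) _; exact: der_mul.
- split; first by rewrite /= a0 oppr0.
  apply: ED (Qinv _) _; exact: der_inv.
Qed.

Fixpoint Pre (c : Z -> B) (k : nat) : B :=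
  if k is k'.+1 then mul (Pre c k') (c (inZp k')) else one.
Notation N := (Zp_trunc p).+2.

Lemma PreQ c : Pre c N = Q c.
Proof.
have H k : Pre c k = L (map c (map (@inZp (Zp_trunc p).+1) (iota 0 k))).
  elim: k => [|k IH] //.
  have -> : iota 0 k.+1 = iota 0 k ++ [:: k] by rewrite -addn1 iotaD.
  by rewrite !map_cat Lcat -IH /= m1r.
rewrite H /Q -val_enum_ord -map_comp -map_comp.
by congr L; apply: eq_map => i /=; rewrite valZpK.
Qed.

Lemma Pre_eq c f m : (forall k, (k < m)%N -> c (inZp k) = f (inZp k)) -> Pre c m = Pre f m.
Proof.
elim: m => [|m IH] h //=.
by rewrite IH ?h // => k km; apply: h; apply: ltnW.
Qed.

Definition last : Z := ord_max.
Definition delta (b : B) : Z -> B := fun i => if i == last then b else one.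

Lemma delta_comms rest :
  (delta (prod_comms mul inv one rest), 0%R) =
  prod_comms (@wr_mul B mul p) (@wr_inv B inv p) (wr_one one p)
    (map (fun xy => ((delta xy.1, 0%R), (delta xy.2, 0%R))) rest).
Proof.
elim: rest => [|[x y] rest IH] /=.
  by rewrite /wr_one; congr pair; apply: functional_extensionality => i; rewrite /delta; case: ifP.
rewrite -IH /commg_op /wr_mul /wr_inv /=; congr pair.
  apply: functional_extensionality => i; rewrite /shift /= !(oppr0, addr0, add0r, subr0) /delta.
  by case: ifP => _ //; rewrite inv1 !m1l.
by rewrite !oppr0 !addr0.
Qed.

Lemma val_add1 (i : 'Z_p) : i != ord_max -> val (i + 1)%R = (val i).+1.
Proof.
move=> h; have hi : (val i).+1 < (Zp_trunc p).+2.
  have := ltn_ord i; rewrite ltnS leq_eqVlt => /orP [/eqP e|//].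
  by case/eqP: h; apply: val_inj.
rewrite /= !modn_small //; rewrite ?addn1 //.
Qed.
Lemma val_max1 : (ord_max + 1 : 'Z_p)%R = 0%R.
Proof. apply: val_inj => /=. rewrite (modn_small (m:=1)) // addn1 modnn //. Qed.

Lemma one_comm (c : Z -> B) x y : Pre c N = commg_op mul inv x y ->
  (c, 0%R) = commg_op (@wr_mul B mul p) (@wr_inv B inv p)
     ((fun i : Z => mul (inv (Pre c (val i))) x), 0%R) (delta y, (-1)%R).
Proof.
move=> Hc; rewrite /commg_op /wr_mul /wr_inv; congr pair; cbn [fst snd].
  apply: functional_extensionality => i; rewrite /shift.
  rewrite !(oppr0, addr0, add0r, subr0, opprK) addrK invM invK /delta.
  case: eqP => [->|/eqP ni].
    rewrite val_max1.
    have -> : Pre c (val (0%R : Z)) = one by [].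
    rewrite m1r.
    have e1 : Pre c N = mul (Pre c (val last)) (c (inZp (val last))) by [].
    rewrite valZpK in e1.
    rewrite -mA; have -> : mul x (mul y (mul (inv x) (inv y))) = commg_op mul inv x y by [].
    by rewrite -Hc e1 mKl.
  rewrite val_add1 //= inv1 m1l m1r valZpK.
  by rewrite -mA mKr mKl.
by rewrite add0r oppr0 add0r opprK addNr.
Qed.
End Grp.


Unset Implicit Arguments.
Theorem lemma4 (B : Type) (mul : B -> B -> B) (inv : B -> B) (one : B)
  (p : nat) (n : nat) :
  is_group mul inv one -> (2 <= p)%N ->
  cw_le mul inv one n ->
  cw_le (@wr_mul B mul p) (@wr_inv B inv p) (wr_one one p) (maxn 1 n).
Proof.
move=> HG _ hcw w /(derW HG) [w0 Dw].
have [s [ss es]] := hcw _ Dw.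
have [x1 [y1 [rest [Hq Hsz]]]] : exists x1 y1 rest,
    Q mul one w.1 = mul (commg_op mul inv x1 y1) (prod_comms mul inv one rest)
    /\ (size rest < maxn 1 n)%N.
  case: s ss es => [|[x y] rest] ss es.
    exists one, one, [::]; split; last by rewrite leq_max.
    by rewrite es /= /commg_op (inv1 HG) !(m1l HG).
  exists x, y, rest; split => //.
  by rewrite leq_max ss orbT.
set f := w.1; set R := prod_comms mul inv one rest.
pose c := fun i : 'Z_p => if i == last p then mul (f i) (inv R) else f i.
have Hc : Pre mul one c (Zp_trunc p).+2 = commg_op mul inv x1 y1.
  have e1 : forall g : 'Z_p -> B, Pre mul one g (Zp_trunc p).+2 =
      mul (Pre mul one g (val (last p))) (g (inZp (val (last p)))) by [].
  have e2 : forall g : 'Z_p -> B, Pre mul one g (Zp_trunc p).+2 =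
      mul (Pre mul one g (val (last p))) (g (last p)) by move=> g; rewrite e1 valZpK.
  rewrite e2.
  have -> : Pre mul one c (val (last p)) = Pre mul one f (val (last p)).
    apply: Pre_eq => k kl; rewrite /c ifF //.
    apply/negP => /eqP e; have := congr1 val e; rewrite /= modn_small.
      by move=> ek; rewrite ek ltnn in kl.
    by apply: (ltn_trans kl).
  rewrite /c eqxx (mA HG) -(e2 f) (PreQ HG) Hq -!(mA HG) (mVr HG) (m1r HG).
  done.
have Hw : w = wr_mul mul (c, 0%R) (delta one R, 0%R).
  rewrite (surjective_pairing w) w0 /wr_mul /=; congr pair; last by rewrite addr0.
  apply: functional_extensionality => i; rewrite /shift subr0 /c /delta.
  by case: ifP => _; rewrite ?(m1r HG) // -(mA HG) (mVl HG) (m1r HG).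
exists ((((fun i : 'Z_p => mul (inv (Pre mul one c (val i))) x1), 0%R), (delta one y1, (-1)%R))
   :: map (fun xy => ((delta one xy.1, 0%R), (delta one xy.2, 0%R))) rest).
split; first by rewrite /= size_map.
rewrite Hw /= -(delta_comms HG) -(one_comm HG Hc).
done.
Qed.
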